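(* Let $E$ be a finite set, $V \subset \mathbb R^E$ a linear subspace defining an oriented matroid $M$, and $F \subset E$. If $F$ is not an acyclic flat of $M$, then $\mathcal Y_V \cap (\mathbb R_{\geq 0}^F \times \infty^{E \setminus F}) = \emptyset$.
   Context: $\mathbb P^1_{\mathbb R} = \mathbb R \cup\{\infty\}$. $\mathcal Y_V$ is the closure of $V \cap \mathbb R_{\geq 0}^E$ in $(\mathbb P^1_{\mathbb R})^E$ in the analytic topology. $\mathbb R_{\geq 0}^F \times \infty^{E\setminus F}$ is the set of points with nonnegative real coordinates on $F$ and coordinate $\infty$ on $E \setminus F$. The oriented matroid $M$ of $V$ has covectors the sign vectors of elements of $V$; its flats are the zero sets $\{i: v_i = 0\}$ of $v\in V$; a flat $F$ is acyclic if some $v \in V$ has $v_i = 0$ for $i \in F$ and $v_i > 0$ for $i \notin F$. *)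

(* Defs.v *)
From mathcomp Require Import all_boot all_order all_algebra.
From mathcomp Require Import reals.
Set Implicit Arguments. Unset Strict Implicit. Unset Printing Implicit Defensive.
Import Order.TTheory GRing.Theory Num.Theory.
Local Open Scope ring_scope.

(* The real projective line P^1_R = R ∪ {∞}: [Some x] is the real x,
   [None] is the point ∞. *)
Definition P1 (R : realType) := option R.

Definition is_subspace (R : realType) (E : finType) (V : (E -> R) -> Prop) :=
  [/\ V (fun _ => 0),
      (forall u v, V u -> V v -> V (fun i => u i + v i)) &
      (forall (a : R) v, V v -> V (fun i => a * v i))].

Definition is_flat (R : realType) (E : finType) (V : (E -> R) -> Prop)
    (F : {set E}) :=
  exists v, V v /\ forall i, (v i = 0) <-> (i \in F).

Definition is_acyclic_flat (R : realType) (E : finType)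
    (V : (E -> R) -> Prop) (F : {set E}) :=
  is_flat V F /\
  exists v, V v /\ forall i, (i \in F -> v i = 0) /\ (i \notin F -> 0 < v i).

(* Closure in (P^1_R)^E (analytic = product topology, with the standard
   topology on the one-point compactification R ∪ {∞}) of a set S ⊂ R^E,
   embedded via x ↦ (Some x_i)_i.  Written out with the basic
   neighbourhoods: (x-eps, x+eps) around a real point x, and
   {y : M < |y|} ∪ {∞} around ∞. *)
Definition in_P1_closure (R : realType) (E : finType)
    (S : (E -> R) -> Prop) (p : E -> P1 R) :=
  forall (eps M : R), 0 < eps ->
    exists v, S v /\
      forall i, match p i with
                | Some x => `|v i - x| < eps
                | None => M < `|v i|
                end.

Definition Y_V (R : realType) (E : finType) (V : (E -> R) -> Prop)
    (p : E -> P1 R) :=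
  in_P1_closure (fun v => V v /\ forall i, 0 <= v i) p.

Definition nonneg_inf_box (R : realType) (E : finType) (F : {set E})
    (p : E -> P1 R) :=
  forall i, if i \in F then exists2 x : R, p i = Some x & 0 <= x
            else p i = None.

(* Main.v *)
Require Import Defs.
From mathcomp Require Import all_boot all_order all_algebra.
From mathcomp Require Import reals.
From mathcomp Require Import ring lra.
From Stdlib Require Import Classical.
Set Implicit Arguments. Unset Strict Implicit. Unset Printing Implicit Defensive.
Import Order.TTheory GRing.Theory Num.Theory.
Local Open Scope ring_scope.

Lemma lift (R : realType) (E : finType) (V : (E -> R) -> Prop)
  (HV : is_subspace V) (s : seq E) :
  exists C : R, 0 <= C /\ forall v, V v -> exists k, V k /\
     (forall g, g \in s -> k g = 0) /\
     forall i, `|v i - k i| <= C * \sum_(g <- s) `|v g|.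
Proof.
case: HV => V0 VD VZ.
elim: s => [|g s [C' [C'ge0 IH]]].
  exists 0; split => // v Vv; exists v; split => //; split => // i.
  by rewrite subrr normr0 mul0r.
have msum : forall v : E -> R, \sum_(h <- g :: s) `|v h| = `|v g| + \sum_(h <- s) `|v h|.
  by move=> v; rewrite big_cons.
have mge0 : forall v : E -> R, 0 <= \sum_(h <- s) `|v h|.
  by move=> v; apply: sumr_ge0 => h _.
case: (classic (exists b, V b /\ (forall h, h \in s -> b h = 0) /\ b g <> 0)).
  move=> [b [Vb [bs bg]]].
  pose b' := fun i => (b g)^-1 * b i.
  have Vb' : V b' by apply: VZ.
  have b'g : b' g = 1 by rewrite /b' mulVf //; apply/eqP.
  have b's : forall h, h \in s -> b' h = 0 by move=> h hs; rewrite /b' /= (bs h hs) mulr0.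
  pose B := \sum_i `|b' i|.
  have Bge0 : 0 <= B by apply: sumr_ge0.
  have bB : forall i, `|b' i| <= B.
    move=> i; rewrite /B (bigD1 i) //= lerDl; exact: sumr_ge0.
  exists (C' + (1 + C') * B); split.
    by apply: addr_ge0 => //; apply: mulr_ge0 => //; lra.
  move=> v Vv; have [k' [Vk' [k's k'b]]] := IH v Vv.
  exists (fun i => k' i + (- k' g) * b' i); split.
    by apply: VD => //; apply: VZ.
  split.
    move=> h; rewrite inE => /orP [/eqP ->|hs].
      by rewrite b'g mulr1 subrr.
    by rewrite k's // b's // mulr0 addr0.
  move=> i; rewrite msum.
  have e1 : v i - (k' i + - k' g * b' i) = (v i - k' i) + k' g * b' i by ring.
  rewrite e1.
  apply: le_trans (ler_normD _ _) _.
  rewrite normrM.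
  have h1 := k'b i.
  have h2 := k'b g.
  have h3 : `|k' g| <= `|v g| + `|v g - k' g|.
    have := ler_normD (v g) (k' g - v g).
    by rewrite addrC subrK distrC.
  have h4 := bB i.
  have h5 := mge0 v.
  have h6 : 0 <= `|v g| by [].
  have h7 : 0 <= `|b' i| by [].
  set m := \sum_(h <- s) `|v h| in h1 h2 h5 *.
  have h8 : `|k' g| * `|b' i| <= (`|v g| + C' * m) * B.
    apply: ler_pM => //; lra.
  have p1 : 0 <= C' * `|v g| by apply: mulr_ge0.
  have p2 : 0 <= B * m by apply: mulr_ge0.
  have p3 : 0 <= C' * B * `|v g| by apply: mulr_ge0 => //; apply: mulr_ge0.
  have e2 : (C' + (1 + C') * B) * (`|v g| + m) =
     C' * `|v g| + C' * m + B * `|v g| + B * m + C' * B * `|v g| + C' * B * m by ring.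
  have e3 : (`|v g| + C' * m) * B = B * `|v g| + C' * B * m by ring.
  rewrite e2; rewrite e3 in h8.
  apply: le_trans (lerD h1 h8) _.
  move: p1 p2 p3; clear.
  move: (C' * `|v g|) (B * m) (C' * B * `|v g|) (C' * m) (B * `|v g|) (C' * B * m).
  move=> x1 x2 x3 x4 x5 x6; lra.
move=> nob.
exists C'; split => // v Vv; have [k' [Vk' [k's k'b]]] := IH v Vv.
exists k'; split => //; split.
  move=> h; rewrite inE => /orP [/eqP ->|hs]; last exact: k's.
  apply: NNPP => kg; apply: nob; exists k'; split => //.
move=> i; rewrite msum; apply: le_trans (k'b i) _.
apply: ler_wpM2l => //; rewrite lerDr //.
Qed.

Theorem lemma3p2 (R : realType) (E : finType) (V : (E -> R) -> Prop)
    (F : {set E}) :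
  is_subspace V ->
  ~ is_acyclic_flat V F ->
  forall p : E -> P1 R, ~ (Y_V V p /\ nonneg_inf_box F p).
Proof.
move=> HV Hnot p [HY Hbox]; apply: Hnot.
have [C [Cge0 HC]] := lift HV (enum F).
pose X i := if p i is Some x then `|x| else 0.
pose S := \sum_(g <- enum F) (X g + 1).
have [v [[Vv vge0] Hcl]] := HY 1 (C * S) ltr01.
have [k [Vk [kF kb]]] := HC v Vv.
have mS : \sum_(g <- enum F) `|v g| <= S.
  rewrite /S big_seq [X in _ <= X]big_seq; apply: ler_sum => g.
  rewrite mem_enum => gF.
  have := Hbox g; rewrite gF => -[x px _].
  have := Hcl g; rewrite px /X px => h.
  have := ler_normD (v g - x) x; rewrite subrK => h'.
  lra.
have kpos : forall i, i \notin F -> 0 < k i.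
  move=> i iF.
  have := Hbox i; rewrite (negbTE iF) => pi.
  have := Hcl i; rewrite pi ger0_norm // => h.
  have h1 := kb i.
  have h2 : C * \sum_(g <- enum F) `|v g| <= C * S by apply: ler_wpM2l.
  have h3 := ler_norm (v i - k i).
  lra.
have kF' : forall i, i \in F -> k i = 0 by move=> i iF; apply: kF; rewrite mem_enum.
split.
  exists k; split => // i; split; last exact: kF'.
  move=> ki; apply: contraT => iF; have := kpos i iF; rewrite ki; lra.
exists k; split => // i; split; [exact: kF' | exact: kpos].
Qed.
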